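(* (Local Lipschitz continuity of the backstepping control kernel operators.) For every $\bar\tau>0$ and every $M>0$ there exist constants $L_K,L_J,L_L>0$ such that for all $\tau_1,\tau_2\in(0,\bar\tau]$, all $\eta_1\in(0,\tau_1)$, $\eta_2\in(0,\tau_2)$, all $f_1,f_2\in C^1(\mathcal T_1)$ and all $c_1,c_2\in\underline C$ with $\|f_i\|_{C^1(\mathcal T_1)}\le M$ and $\|c_i\|_{C^1[0,1]}\le M$ ($i=1,2$): \begin{align*} \|\mathcal K(\tau_1,f_1,c_1)-\mathcal K(\tau_2,f_2,c_2)\|&\le L_K\max\{|\tau_1-\tau_2|,\|f_1-f_2\|,\|c_1-c_2\|\},\\ \|\mathcal L(\tau_1,\eta_1,f_1,c_1)-\mathcal L(\tau_2,\eta_2,f_2,c_2)\|&\le L_L\max\{|\tau_1-\tau_2|,|\eta_1-\eta_2|,\|f_1-f_2\|,\|c_1-c_2\|\},\\ \|\mathcal J(\tau_1,f_1,c_1)-\mathcal J(\tau_2,f_2,c_2)\|&\le L_J\max\{|\tau_1-\tau_2|,\|f_1-f_2\|,\|c_1-c_2\|\}, \end{align*} where on the left the sup norm is over $\mathcal T_1$ for $\mathcal K$ and over $[0,1]$ for $\mathcal L,\mathcal J$ (both vanish on $[1,\infty)$), and on the right $\|\cdot\|$ are sup norms.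
   Context: Notation: $\mathcal T_1=\{(s,q):0\le s\le q\le 1\}$; $\underline C=\{c\in C^1[0,1]:c(1)=0\}$; $\|g\|$ denotes the sup norm of $g$ over its domain. Control kernels: given a delay $\tau>0$, $f\in C^1(\mathcal T_1)$ and $c\in\underline C$, let $K\in C^0(\mathcal T_1)$ be the unique continuous solution of the integral equation $$K(s,q)=-\int_s^{s+1-q}f(\theta,\theta-s+q)\,d\theta+\int_s^{s+1-q}\!\int_\theta^{\theta-s+q}f(r,\theta-s+q)K(\theta,r)\,dr\,d\theta+\mathbf 1_{\{s+\tau<q\}}\Big(-c(s-q+1+\tau)+\int_{s-q+1+\tau}^1c(\theta)K(s-q+1+\tau,\theta)\,d\theta\Big),$$ which is the characteristic form of $K_s+K_q=f(s,q)-\int_s^qK(s,r)f(r,q)\,dr$ on $\mathcal T_1$ with $K(s,1)=\int_{s+\tau}^1K(s+\tau,\theta)c(\theta)d\theta-c(s+\tau)$ if $s+\tau<1$ and $K(s,1)=0$ if $s+\tau\ge1$. Define $J(\sigma)=\int_\sigma^1K(\sigma,q)c(q)\,dq-c(\sigma)$ for $0\le\sigma<1$ and $J(\sigma)=0$ for $\sigma\ge1$; and for $\eta>0$ define $L(\phi)=J(\phi+\eta)$ for $0\le\phi<1$ and $L(\phi)=0$ for $\phi\ge1$. The kernel operators are $\mathcal K(\tau,f,c):=K$, $\mathcal J(\tau,f,c):=J$, $\mathcal L(\tau,\eta,f,c):=L$. *)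

(* Defs.v *)
From Stdlib Require Import Reals.
From Coquelicot Require Import Coquelicot.
Open Scope R_scope.

Definition T1 (p : R * R) : Prop := 0 <= fst p /\ fst p <= snd p /\ snd p <= 1.

(* f is C^1: partial derivatives fs (in s) and fq (in q) exist and are continuous.
   (f is given on all of R^2; only its values on T1 matter.) *)
Definition C1_2 (f fs fq : R -> R -> R) : Prop :=
  (forall s q, is_derive (fun x => f x q) s (fs s q)) /\
  (forall s q, is_derive (fun y => f s y) q (fq s q)) /\
  (forall p : R * R, continuous (fun z : R * R => fs (fst z) (snd z)) p) /\
  (forall p : R * R, continuous (fun z : R * R => fq (fst z) (snd z)) p).

Definition C1_1 (c dc : R -> R) : Prop :=
  (forall x, is_derive c x (dc x)) /\ (forall x, continuous dc x).

Definition C1_norm_le_T1 (f fs fq : R -> R -> R) (M : R) : Prop :=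
  forall s q, T1 (s, q) -> Rabs (f s q) <= M /\ Rabs (fs s q) <= M /\ Rabs (fq s q) <= M.

Definition C1_norm_le_01 (c dc : R -> R) (M : R) : Prop :=
  forall x, 0 <= x <= 1 -> Rabs (c x) <= M /\ Rabs (dc x) <= M.

Definition kernel_eq (tau : R) (f : R -> R -> R) (c : R -> R) (K : R -> R -> R) : Prop :=
  forall s q, T1 (s, q) ->
    K s q =
      - RInt (fun th => f th (th - s + q)) s (s + 1 - q)
      + RInt (fun th => RInt (fun r => f r (th - s + q) * K th r) th (th - s + q))
             s (s + 1 - q)
      + (if Rlt_dec (s + tau) q then
           - c (s - q + 1 + tau)
           + RInt (fun th => c th * K (s - q + 1 + tau) th) (s - q + 1 + tau) 1
         else 0).

Definition is_kernel (tau : R) (f : R -> R -> R) (c : R -> R) (K : R -> R -> R) : Prop :=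
  continuous_on T1 (fun p : R * R => K (fst p) (snd p)) /\ kernel_eq tau f c K.

(* J = \mathcal J(tau,f,c), computed from K = \mathcal K(tau,f,c). *)
Definition Jfun (K : R -> R -> R) (c : R -> R) (sigma : R) : R :=
  if Rlt_dec sigma 1 then RInt (fun q => K sigma q * c q) sigma 1 - c sigma else 0.

Definition Lfun (K : R -> R -> R) (c : R -> R) (eta phi : R) : R :=
  if Rlt_dec phi 1 then Jfun K c (phi + eta) else 0.

(* Main.v *)
Require Import Defs.
From Stdlib Require Import Reals Lra.
From Coquelicot Require Import Coquelicot.
Open Scope R_scope.


Notation cR f x := (@continuous R_UniformSpace R_UniformSpace f x).

Lemma loc_R_intro x (P:R->Prop) : (exists d:posreal, forall y, Rabs (y-x) < d -> P y) -> locally x P.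
Proof. intros [d H]. exists d. intros y Hy. apply H. exact Hy. Qed.
Lemma loc_R_elim x (P:R->Prop) : locally x P -> exists d:posreal, forall y, Rabs (y-x) < d -> P y.
Proof. intros [d H]. exists d. intros y Hy. apply H. exact Hy. Qed.

Lemma cR_eps (f : R -> R) x :
  (forall eps:posreal, exists d:posreal, forall y, Rabs (y-x) < d -> Rabs (f y - f x) < eps) -> cR f x.
Proof.
  intros H. apply continuity_pt_filterlim. apply continuity_pt_locally.
  intros eps. apply loc_R_intro. apply H.
Qed.
Lemma cR_eps_elim (f : R -> R) x : cR f x ->
  (forall eps:posreal, exists d:posreal, forall y, Rabs (y-x) < d -> Rabs (f y - f x) < eps).
Proof.
  intros H eps. apply continuity_pt_filterlim in H. apply continuity_pt_locally with (eps:=eps) in H.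
  apply loc_R_elim in H. exact H.
Qed.

Lemma cR_plus (f g : R -> R) x : cR f x -> cR g x -> cR (fun y => f y + g y) x.
Proof. intros. exact (@continuous_plus R_UniformSpace R_AbsRing R_NormedModule f g x H H0). Qed.
Lemma cR_minus (f g : R -> R) x : cR f x -> cR g x -> cR (fun y => f y - g y) x.
Proof. intros. exact (@continuous_minus R_UniformSpace R_AbsRing R_NormedModule f g x H H0). Qed.
Lemma cR_mult (f g : R -> R) x : cR f x -> cR g x -> cR (fun y => f y * g y) x.
Proof. intros. exact (@continuous_mult R_UniformSpace R_AbsRing f g x H H0). Qed.
Lemma cR_opp (f : R -> R) x : cR f x -> cR (fun y => - f y) x.
Proof. intros. exact (@continuous_opp R_UniformSpace R_AbsRing R_NormedModule f x H). Qed.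
Lemma cR_const (c x : R) : cR (fun _ => c) x.
Proof. exact (@continuous_const R_UniformSpace R_UniformSpace c x). Qed.
Lemma cR_id (x : R) : cR (fun y => y) x.
Proof. exact (@continuous_id R_UniformSpace x). Qed.
Lemma cR_exp (f : R -> R) x : cR f x -> cR (fun y => exp (f y)) x.
Proof. intros H. apply (continuous_comp f exp). exact H. apply continuous_exp. Qed.

Definition C2 (F : R -> R -> R) := forall x y, continuity_2d_pt F x y.

Lemma C2_comp (F : R -> R -> R) (g1 g2 : R -> R) x :
  C2 F -> cR g1 x -> cR g2 x -> cR (fun y => F (g1 y) (g2 y)) x.
Proof.
  intros HF H1 H2. apply (continuous_comp_2 g1 g2 F); auto.
  apply continuity_2d_pt_filterlim. apply HF.
Qed.

Lemma ex_RInt_cont (f : R -> R) a b : (forall x, cR f x) -> ex_RInt f a b.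
Proof. intros H. apply (@ex_RInt_continuous R_CompleteNormedModule). intros; apply H. Qed.

Lemma C2_plus F G : C2 F -> C2 G -> C2 (fun x y => F x y + G x y).
Proof.
  intros HF HG x y eps. destruct (HF x y (pos_div_2 eps)) as [d1 H1].
  destruct (HG x y (pos_div_2 eps)) as [d2 H2].
  exists (mkposreal _ (Rmin_pos _ _ (cond_pos d1) (cond_pos d2))). simpl. intros u v Hu Hv.
  assert (A1 := H1 u v (Rlt_le_trans _ _ _ Hu (Rmin_l _ _)) (Rlt_le_trans _ _ _ Hv (Rmin_l _ _))).
  assert (A2 := H2 u v (Rlt_le_trans _ _ _ Hu (Rmin_r _ _)) (Rlt_le_trans _ _ _ Hv (Rmin_r _ _))).
  simpl in *. replace (F u v + G u v - (F x y + G x y)) with ((F u v - F x y) + (G u v - G x y)) by ring.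
  eapply Rle_lt_trans. apply Rabs_triang. lra.
Qed.

Lemma C2_opp F : C2 F -> C2 (fun x y => - F x y).
Proof.
  intros HF x y eps. destruct (HF x y eps) as [d H]. exists d. intros u v Hu Hv.
  replace (- F u v - - F x y) with (- (F u v - F x y)) by ring. rewrite Rabs_Ropp. auto.
Qed.

Notation RR := (prod_UniformSpace R_UniformSpace R_UniformSpace).
Notation cRR F p := (@continuous RR R_UniformSpace (fun z : R * R => F (fst z) (snd z)) p).

Lemma C2_to F : C2 F -> forall p, cRR F p.
Proof. intros H [x y]. apply continuity_2d_pt_filterlim. apply H. Qed.
Lemma C2_of F : (forall p, cRR F p) -> C2 F.
Proof. intros H x y. apply continuity_2d_pt_filterlim. apply (H (x,y)). Qed.

Lemma C2_mult F G : C2 F -> C2 G -> C2 (fun x y => F x y * G x y).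
Proof.
  intros HF HG. apply C2_of. intros p.
  exact (@continuous_mult RR R_AbsRing (fun z => F (fst z) (snd z)) (fun z => G (fst z) (snd z)) p (C2_to F HF p) (C2_to G HG p)).
Qed.

Lemma C2_comp2 F G1 G2 : C2 F -> C2 G1 -> C2 G2 -> C2 (fun x y => F (G1 x y) (G2 x y)).
Proof.
  intros HF H1 H2. apply C2_of. intros p.
  apply (@continuous_comp_2 RR R_UniformSpace R_UniformSpace R_UniformSpace
     (fun z => G1 (fst z) (snd z)) (fun z => G2 (fst z) (snd z)) F p).
  apply C2_to; auto. apply C2_to; auto.
  apply (C2_to F HF (G1 (fst p) (snd p), G2 (fst p) (snd p))).
Qed.

Lemma C2_fst : C2 (fun x y => x).
Proof. apply C2_of. intros [x y]. apply continuous_fst. Qed.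
Lemma C2_snd : C2 (fun x y => y).
Proof. apply C2_of. intros [x y]. apply continuous_snd. Qed.
Lemma C2_const c : C2 (fun x y => c).
Proof. apply C2_of. intros p. apply continuous_const. Qed.
Lemma C2_lift1 (g : R -> R) : (forall x, cR g x) -> C2 (fun x y => g x).
Proof. intros H. apply C2_of. intros [x y]. apply (continuous_comp (fun z:R*R => fst z) g). apply continuous_fst. apply H. Qed.
Lemma C2_lift2 (g : R -> R) : (forall x, cR g x) -> C2 (fun x y => g y).
Proof. intros H. apply C2_of. intros [x y]. apply (continuous_comp (fun z:R*R => snd z) g). apply continuous_snd. apply H. Qed.
Lemma C2_minus F G : C2 F -> C2 G -> C2 (fun x y => F x y - G x y).
Proof. intros. apply (C2_plus F (fun x y => - G x y)); auto. apply C2_opp; auto. Qed.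

Lemma C2_sec1 F x : C2 F -> forall y, cR (fun t => F t x) y.
Proof. intros H y. apply (C2_comp F (fun t => t) (fun _ => x)); auto. apply cR_id. apply cR_const. Qed.
Lemma C2_sec2 F x : C2 F -> forall y, cR (fun t => F x t) y.
Proof. intros H y. apply (C2_comp F (fun _ => x) (fun t => t)); auto. apply cR_const. apply cR_id. Qed.

Lemma derive_cont (g dg : R -> R) x : is_derive g x (dg x) -> cR g x.
Proof. intros H. apply (@ex_derive_continuous R_AbsRing R_NormedModule). exists (dg x). exact H. Qed.

Lemma f_C2 f fs fq : C1_2 f fs fq -> C2 f.
Proof.
  intros [Hs [Hq [Cs Cq]]]. 
  assert (HfsC : C2 fs) by (apply C2_of; intros p; apply Cs).
  intros x y eps.
  destruct (HfsC x y (mkposreal 1 Rlt_0_1)) as [d1 H1]. simpl in H1.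
  assert (Hc2 : cR (fun v => f x v) y) by (apply (derive_cont _ (fun v => fq x v)); apply Hq).
  destruct (cR_eps_elim _ _ Hc2 (pos_div_2 eps)) as [d2 H2].
  set (Bs := Rabs (fs x y) + 1).
  assert (HBs : 0 < Bs) by (unfold Bs; generalize (Rabs_pos (fs x y)); lra).
  assert (Hd3 : 0 < eps / (2 * Bs)) by (apply Rdiv_lt_0_compat; [apply cond_pos | lra]).
  exists (mkposreal _ (Rmin_pos _ _ (Rmin_pos _ _ (cond_pos d1) (cond_pos d2)) Hd3)). simpl.
  intros u v Hu Hv.
  assert (Hu1 : Rabs (u - x) < d1) by (eapply Rlt_le_trans; [exact Hu|]; eapply Rle_trans; [apply Rmin_l|apply Rmin_l]).
  assert (Hv1 : Rabs (v - y) < d1) by (eapply Rlt_le_trans; [exact Hv|]; eapply Rle_trans; [apply Rmin_l|apply Rmin_l]).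
  assert (Hv2 : Rabs (v - y) < d2) by (eapply Rlt_le_trans; [exact Hv|]; eapply Rle_trans; [apply Rmin_l|apply Rmin_r]).
  assert (Hu3 : Rabs (u - x) < eps / (2*Bs)) by (eapply Rlt_le_trans; [exact Hu|]; apply Rmin_r).
  destruct (MVT_gen (fun t => f t v) x u (fun t => fs t v)) as [xi [Hxi Heq]].
  { intros t _. apply Hs. }
  { intros t _. apply continuity_pt_filterlim. apply (derive_cont (fun t => f t v) (fun t => fs t v)). apply Hs. }
  simpl in Heq.
  assert (Hxi1 : Rabs (xi - x) <= Rabs (u - x)).
  { destruct (Rle_dec x u).
    - rewrite Rmin_left in Hxi by lra. rewrite Rmax_right in Hxi by lra.
      rewrite !Rabs_right by lra. lra.
    - rewrite Rmin_right in Hxi by lra. rewrite Rmax_left in Hxi by lra.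
      rewrite !Rabs_left1 by lra. lra. }
  assert (Hb : Rabs (fs xi v) < Bs).
  { assert (Hh := H1 xi v (Rle_lt_trans _ _ _ Hxi1 Hu1) Hv1).
    unfold Bs. replace (fs xi v) with ((fs xi v - fs x y) + fs x y) by ring.
    eapply Rle_lt_trans. apply Rabs_triang. lra. }
  replace (f u v - f x y) with ((f u v - f x v) + (f x v - f x y)) by ring.
  eapply Rle_lt_trans. apply Rabs_triang.
  rewrite Heq, Rabs_mult.
  assert (Rabs (fs xi v) * Rabs (u - x) <= Bs * (eps / (2*Bs))).
  { apply Rmult_le_compat; try apply Rabs_pos; lra. }
  replace (Bs * (eps / (2 * Bs))) with (eps/2) in H by (field; lra).
  specialize (H2 v Hv2). simpl in H2. destruct eps; simpl in *. lra.
Qed.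

Lemma c_cont c dc : C1_1 c dc -> forall x, cR c x.
Proof. intros [H _] x. apply (derive_cont c dc). apply H. Qed.

Lemma c_lip c dc M : C1_1 c dc -> C1_norm_le_01 c dc M ->
  forall x y, 0 <= x <= 1 -> 0 <= y <= 1 -> Rabs (c x - c y) <= M * Rabs (x - y).
Proof.
  intros [Hd _] HM x y Hx Hy.
  destruct (MVT_gen c y x dc) as [xi [Hxi Heq]].
  { intros t _. apply Hd. }
  { intros t _. apply continuity_pt_filterlim. apply (derive_cont c dc). apply Hd. }
  rewrite Heq, Rabs_mult. apply Rmult_le_compat_r. apply Rabs_pos.
  apply HM. split.
  - eapply Rle_trans; [|apply Hxi]. apply Rmin_glb; lra.
  - eapply Rle_trans; [apply Hxi|]. apply Rmax_lub; lra.
Qed.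

Definition pr1 s := Rmax 0 (Rmin s 1).
Definition pr2 s q := Rmax (pr1 s) (Rmin q 1).
Definition Kt (K : R -> R -> R) s q := K (pr1 s) (pr2 s q).

Lemma pr_T1 s q : T1 (pr1 s, pr2 s q).
Proof.
  unfold T1; simpl.
  assert (0 <= pr1 s) by apply Rmax_l.
  assert (pr1 s <= 1) by (apply Rmax_lub; [lra|apply Rmin_r]).
  split; [lra|split]. apply Rmax_l. unfold pr2. apply Rmax_lub; [lra|apply Rmin_r].
Qed.

Lemma pr_id s q : T1 (s, q) -> pr1 s = s /\ pr2 s q = q.
Proof.
  unfold T1, pr2, pr1; simpl; intros H.
  rewrite (Rmin_left s 1) by lra. rewrite (Rmax_right 0 s) by lra.
  rewrite (Rmin_left q 1) by lra. rewrite (Rmax_right s q) by lra. auto.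
Qed.

Lemma Kt_T1 K s q : T1 (s,q) -> Kt K s q = K s q.
Proof. intros H. unfold Kt. destruct (pr_id s q H) as [-> ->]. reflexivity. Qed.

Lemma Rmax_lip a b c d : Rabs (Rmax a b - Rmax c d) <= Rmax (Rabs (a - c)) (Rabs (b - d)).
Proof.
  unfold Rmax; destruct (Rle_dec a b); destruct (Rle_dec c d);
  destruct (Rle_dec (Rabs (a-c)) (Rabs (b-d))); unfold Rabs in *; repeat (destruct Rcase_abs); lra.
Qed.
Lemma Rmin_lip a b c d : Rabs (Rmin a b - Rmin c d) <= Rmax (Rabs (a - c)) (Rabs (b - d)).
Proof.
  unfold Rmin, Rmax; destruct (Rle_dec a b); destruct (Rle_dec c d);
  destruct (Rle_dec (Rabs (a-c)) (Rabs (b-d))); unfold Rabs in *; repeat (destruct Rcase_abs); lra.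
Qed.

Lemma pr1_lip u x : Rabs (pr1 u - pr1 x) <= Rabs (u - x).
Proof.
  unfold pr1. eapply Rle_trans. apply Rmax_lip. replace (0-0) with 0 by ring. rewrite Rabs_R0.
  apply Rmax_lub. apply Rabs_pos. eapply Rle_trans. apply Rmin_lip. replace (1-1) with 0 by ring. rewrite Rabs_R0.
  apply Rmax_lub. lra. apply Rabs_pos.
Qed.
Lemma pr2_lip u v x y d : Rabs (u - x) < d -> Rabs (v - y) < d -> Rabs (pr2 u v - pr2 x y) < d.
Proof.
  intros Hu Hv. unfold pr2. eapply Rle_lt_trans. apply Rmax_lip. apply Rmax_lub_lt.
  eapply Rle_lt_trans. apply pr1_lip. auto.
  eapply Rle_lt_trans. apply Rmin_lip. replace (1-1) with 0 by ring. rewrite Rabs_R0.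
  apply Rmax_lub_lt; auto. apply Rle_lt_trans with (Rabs (u-x)); auto. apply Rabs_pos.
Qed.

Lemma Kt_C2 K : continuous_on T1 (fun p : R * R => K (fst p) (snd p)) -> C2 (Kt K).
Proof.
  intros HK x y eps.
  assert (Hp := pr_T1 x y).
  specialize (HK _ Hp).
  apply (filterlim_locally (F := within T1 (locally (pr1 x, pr2 x y)))) with (eps := eps) in HK.
  unfold within in HK. simpl in HK.
  apply (locally_2d_locally (fun u v => T1 (u, v) -> ball (K (pr1 x) (pr2 x y)) eps (K u v))) in HK.
  destruct HK as [d Hd].
  exists d. intros u v Hu Hv. unfold Kt.
  apply Hd. eapply Rle_lt_trans. apply pr1_lip. auto. apply pr2_lip; auto. apply pr_T1.
Qed.

Lemma RInt_abs_gen (f : R -> R) a b C : ex_RInt f a b ->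
  (forall t, Rmin a b <= t <= Rmax a b -> Rabs (f t) <= C) -> Rabs (RInt f a b) <= Rabs (b - a) * C.
Proof.
  intros He Hb. destruct (Rle_dec a b).
  - rewrite (Rabs_right (b-a)) by lra. apply abs_RInt_le_const; auto.
    intros t Ht. apply Hb. rewrite Rmin_left, Rmax_right; lra.
  - rewrite <- (opp_RInt_swap f b a) by (apply ex_RInt_swap; auto).
    replace (Rabs (opp (RInt f b a))) with (Rabs (RInt f b a)) by (unfold opp; simpl; rewrite Rabs_Ropp; auto).
    rewrite (Rabs_left (b-a)) by lra. replace (- (b - a)) with (a - b) by ring.
    apply abs_RInt_le_const; [lra| apply ex_RInt_swap; auto |].
    intros t Ht. apply Hb. rewrite Rmin_right, Rmax_left; lra.
Qed.

Lemma C2_bounded F a b c d : C2 F -> a <= b -> c <= d ->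
  exists B, forall x y, a <= x <= b -> c <= y <= d -> Rabs (F x y) <= B.
Proof.
  intros HF Hab Hcd.
  destruct (uniform_continuity_2d F a b c d (fun x y _ _ => HF x y) (mkposreal 1 Rlt_0_1)) as [dl Hdl].
  simpl in Hdl.
  destruct (bounded_continuity (K:=R_AbsRing) (fun x => F x c) a b) as [B0 HB0].
  { intros x _. apply (C2_sec1 F c HF x). }
  assert (P : forall n : nat, forall x y, a <= x <= b -> c <= y <= d -> y <= c + INR n * (dl/2) -> Rabs (F x y) <= B0 + INR n).
  { induction n; intros x y Hx Hy Hn.
    - simpl in Hn. replace y with c by lra. simpl. rewrite Rplus_0_r. left. apply (HB0 x Hx).
    - destruct (Rle_dec y (c + INR n * (dl/2))).
      + eapply Rle_trans. apply IHn; auto. rewrite S_INR. lra.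
      + assert (Hd := cond_pos dl). rewrite S_INR in Hn. assert (Hn0 := pos_INR n).
        set (y' := Rmax c (y - dl/2)).
        assert (Hy1 : c <= y') by apply Rmax_l.
        assert (Hy2 : y - dl/2 <= y') by apply Rmax_r.
        assert (Hy3 : y' <= y) by (apply Rmax_lub; lra).
        assert (Hy' : c <= y' <= d) by lra.
        assert (Hy4 : y' <= c + INR n * (dl/2)).
        { unfold y'. apply Rmax_lub; nra. }
        specialize (IHn x y' Hx Hy' Hy4).
        assert (Hu := Hdl x y' x y Hx Hy' Hx Hy).
        replace (x - x) with 0 in Hu by ring. rewrite Rabs_R0 in Hu.
        rewrite (Rabs_right (y - y')) in Hu by lra.
        specialize (Hu (cond_pos dl) ltac:(lra)).
        rewrite S_INR. replace (F x y) with ((F x y - F x y') + F x y') by ring.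
        eapply Rle_trans. apply Rabs_triang. lra. }
  assert (Hd := cond_pos dl).
  destruct (nfloor_ex ((d - c) / (dl/2))) as [n Hn].
  { apply Rdiv_le_0_compat; lra. }
  exists (B0 + INR (S n)). intros x y Hx Hy. apply P; auto.
  rewrite S_INR. destruct Hn as [_ Hn].
  apply (Rmult_lt_compat_r (dl/2)) in Hn; [|lra].
  unfold Rdiv at 1 in Hn. rewrite Rmult_assoc, Rinv_l, Rmult_1_r in Hn by lra. lra.
Qed.

Lemma Rabs_between t a b : Rmin a b <= t <= Rmax a b -> forall a0 b0, Rabs (a - a0) < 1 -> Rabs (b - b0) < 1 ->
  Rmin a0 b0 - 1 <= t <= Rmax a0 b0 + 1.
Proof.
  intros Ht a0 b0 Ha Hb. unfold Rmin, Rmax in *.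
  destruct (Rle_dec a b); destruct (Rle_dec a0 b0); unfold Rabs in *; repeat destruct Rcase_abs; lra.
Qed.

Lemma PIC F (al be : R -> R) th0 : C2 F -> (forall x, cR al x) -> (forall x, cR be x) ->
  cR (fun th => RInt (fun r => F th r) (al th) (be th)) th0.
Proof.
  intros HF Ha Hb. apply cR_eps. intros eps.
  set (a0 := al th0). set (b0 := be th0).
  set (lo := Rmin a0 b0 - 1). set (hi := Rmax a0 b0 + 1).
  assert (Hlohi : lo <= hi) by (unfold lo, hi; generalize (Rmin_l a0 b0) (Rmax_l a0 b0); lra).
  assert (He := cond_pos eps).
  set (L := Rabs (b0 - a0) + 3).
  assert (HL : 0 < L) by (unfold L; generalize (Rabs_pos (b0-a0)); lra).
  destruct (uniform_continuity_2d F (th0-1) (th0+1) lo hi (fun x y _ _ => HF x y)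
             (mkposreal (eps / (2*L)) ltac:(apply Rdiv_lt_0_compat; lra))) as [d1 Hd1].
  simpl in Hd1.
  destruct (C2_bounded F th0 th0 lo hi HF (Rle_refl _) Hlohi) as [B HB].
  set (B' := Rabs B + 1). assert (HB' : 0 < B') by (unfold B'; generalize (Rabs_pos B); lra).
  assert (HBB : forall t, lo <= t <= hi -> Rabs (F th0 t) <= B').
  { intros t Ht. eapply Rle_trans. apply HB; auto; lra. unfold B'. generalize (Rle_abs B); lra. }
  set (e2 := Rmin 1 (eps / (4 * B'))).
  assert (He2 : 0 < e2) by (apply Rmin_pos; [lra| apply Rdiv_lt_0_compat; lra]).
  destruct (cR_eps_elim al th0 (Ha th0) (mkposreal e2 He2)) as [da Hda].
  destruct (cR_eps_elim be th0 (Hb th0) (mkposreal e2 He2)) as [db Hdb].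
  simpl in Hda, Hdb.
  exists (mkposreal _ (Rmin_pos _ _ (Rmin_pos _ _ (cond_pos d1) Rlt_0_1) (Rmin_pos _ _ (cond_pos da) (cond_pos db)))).
  simpl. intros th Hth.
  assert (Hth1 : Rabs (th - th0) < d1) by (eapply Rlt_le_trans; [exact Hth|]; eapply Rle_trans; apply Rmin_l).
  assert (Hth2 : Rabs (th - th0) < 1) by (eapply Rlt_le_trans; [exact Hth|]; eapply Rle_trans; [apply Rmin_l|apply Rmin_r]).
  assert (Hth3 : Rabs (th - th0) < da) by (eapply Rlt_le_trans; [exact Hth|]; eapply Rle_trans; [apply Rmin_r|apply Rmin_l]).
  assert (Hth4 : Rabs (th - th0) < db) by (eapply Rlt_le_trans; [exact Hth|]; eapply Rle_trans; apply Rmin_r).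
  specialize (Hda th Hth3). specialize (Hdb th Hth4). fold a0 in Hda. fold b0 in Hdb.
  assert (Hda1 : Rabs (al th - a0) < 1) by (eapply Rlt_le_trans; [exact Hda|]; apply Rmin_l).
  assert (Hdb1 : Rabs (be th - b0) < 1) by (eapply Rlt_le_trans; [exact Hdb|]; apply Rmin_l).
  assert (Hda2 : Rabs (al th - a0) < eps / (4*B')) by (eapply Rlt_le_trans; [exact Hda|]; apply Rmin_r).
  assert (Hdb2 : Rabs (be th - b0) < eps / (4*B')) by (eapply Rlt_le_trans; [exact Hdb|]; apply Rmin_r).
  assert (HthI : th0 - 1 <= th <= th0 + 1) by (unfold Rabs in Hth2; destruct Rcase_abs; lra).
  assert (Hth0I : th0 - 1 <= th0 <= th0 + 1) by lra.
  assert (Ex : forall x a b, ex_RInt (fun r => F x r) a b) by (intros; apply ex_RInt_cont; apply C2_sec2; auto).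
  replace (RInt (fun r : R => F th r) (al th) (be th) - RInt (fun r : R => F th0 r) a0 b0)
    with (RInt (fun r => F th r - F th0 r) (al th) (be th) +
          (RInt (fun r => F th0 r) (al th) a0 + RInt (fun r => F th0 r) b0 (be th))).
  2:{ assert (E1 := RInt_minus (V:=R_CompleteNormedModule) (fun r => F th r) (fun r => F th0 r) (al th) (be th) (Ex _ _ _) (Ex _ _ _)).
      simpl in E1. unfold minus, plus, opp in E1; simpl in E1. unfold Rminus. rewrite E1.
      assert (C1 := RInt_Chasles (V:=R_CompleteNormedModule) (fun r => F th0 r) (al th) a0 b0 (Ex _ _ _) (Ex _ _ _)).
      assert (C2' := RInt_Chasles (V:=R_CompleteNormedModule) (fun r => F th0 r) (al th) b0 (be th) (Ex _ _ _) (Ex _ _ _)).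
      unfold plus in C1, C2'; simpl in C1, C2'. rewrite <- C2', <- C1. ring. }
  assert (T1b : Rabs (RInt (fun r => F th r - F th0 r) (al th) (be th)) <= Rabs (be th - al th) * (eps / (2*L))).
  { apply RInt_abs_gen. apply ex_RInt_cont. intros x. apply cR_minus; apply C2_sec2; auto.
    intros t Ht. left. apply Hd1; auto. fold lo hi. apply (Rabs_between t (al th) (be th) Ht a0 b0); auto.
    apply (Rabs_between t (al th) (be th) Ht a0 b0); auto. replace (t - t) with 0 by ring. rewrite Rabs_R0. apply cond_pos. }
  assert (T2b : Rabs (RInt (fun r => F th0 r) (al th) a0) <= Rabs (a0 - al th) * B').
  { apply RInt_abs_gen. apply Ex. intros t Ht. apply HBB. unfold lo, hi.
    unfold Rmin, Rmax in *. destruct (Rle_dec (al th) a0); destruct (Rle_dec a0 b0);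
    unfold Rabs in *; repeat destruct Rcase_abs; lra. }
  assert (T3b : Rabs (RInt (fun r => F th0 r) b0 (be th)) <= Rabs (be th - b0) * B').
  { apply RInt_abs_gen. apply Ex. intros t Ht. apply HBB. unfold lo, hi.
    unfold Rmin, Rmax in *. destruct (Rle_dec b0 (be th)); destruct (Rle_dec a0 b0);
    unfold Rabs in *; repeat destruct Rcase_abs; lra. }
  assert (Hw : Rabs (be th - al th) <= L - 1).
  { unfold L. replace (be th - al th) with ((be th - b0) + (b0 - a0) + (a0 - al th)) by ring.
    eapply Rle_trans. apply Rabs_triang. eapply Rle_trans. apply Rplus_le_compat_r. apply Rabs_triang.
    rewrite (Rabs_minus_sym a0). lra. }
  assert (X1 : Rabs (be th - al th) * (eps / (2*L)) <= eps / 2 * ((L-1)/L)).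
  { replace (eps / 2 * ((L-1)/L)) with ((L-1) * (eps/(2*L))) by (field; lra).
    apply Rmult_le_compat_r; [|auto]. apply Rlt_le, Rdiv_lt_0_compat; lra. }
  assert (X2 : eps / 2 * ((L-1)/L) < eps/2).
  { assert ((L-1)/L < 1) by (apply (Rmult_lt_reg_r L); [lra|]; field_simplify; lra). nra. }
  assert (X3 : Rabs (a0 - al th) * B' <= eps / (4 * B') * B') by (rewrite Rabs_minus_sym; apply Rmult_le_compat_r; lra).
  assert (X4 : Rabs (be th - b0) * B' <= eps / (4 * B') * B') by (apply Rmult_le_compat_r; lra).
  replace (eps / (4 * B') * B') with (eps/4) in X3, X4 by (field; lra).
  eapply Rle_lt_trans. apply Rabs_triang. eapply Rle_lt_trans. apply Rplus_le_compat_l. apply Rabs_triang.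
  simpl. lra.
Qed.

Lemma RInt_affexp C1 C2 p r a b : p <> 0 ->
  RInt (fun t => C1 + C2 * exp (p*t + r)) a b = C1*(b-a) + C2*(exp (p*b+r) - exp (p*a+r))/p.
Proof.
  intros Hp. apply is_RInt_unique.
  assert (H := is_RInt_derive (V:=R_CompleteNormedModule) (fun t => C1 * t + C2 * exp (p*t+r) / p) (fun t => C1 + C2 * exp (p*t + r)) a b).
  match type of H with _ -> _ -> is_RInt _ _ _ ?v => replace (C1*(b-a) + C2*(exp (p*b+r) - exp (p*a+r))/p) with v end.
  apply H.
  - intros x _. auto_derive. auto. field. auto.
  - intros x _. apply (@continuous_plus R_UniformSpace R_AbsRing R_NormedModule (fun _ => C1)).
    apply continuous_const. apply (@continuous_mult R_UniformSpace R_AbsRing (fun _ => C2)). apply continuous_const.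
    apply (continuous_comp (fun t => p*t+r) exp). 2: apply continuous_exp.
    apply (@continuous_plus R_UniformSpace R_AbsRing R_NormedModule (fun t => p*t)). 2: apply continuous_const.
    apply (@continuous_mult R_UniformSpace R_AbsRing (fun _ => p)). apply continuous_const. apply continuous_id.
  - unfold minus, plus, opp; simpl. field. auto.
Qed.

Lemma RInt_abs_le (f g : R -> R) a b : a <= b -> ex_RInt f a b -> ex_RInt g a b ->
  (forall x, a <= x <= b -> Rabs (f x) <= g x) -> Rabs (RInt f a b) <= RInt g a b.
Proof.
  intros Hab Hf Hg H. apply Rabs_le. split.
  - assert (E := RInt_opp (V:=R_CompleteNormedModule) g a b Hg). simpl in E. unfold opp in E; simpl in E.
    rewrite <- E. apply RInt_le; auto. apply (ex_RInt_opp (V:=R_NormedModule)) in Hg. exact Hg.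
    intros x Hx. specialize (H x ltac:(lra)). generalize (Rle_abs (- f x)). rewrite Rabs_Ropp. lra.
  - apply RInt_le; auto. intros x Hx. specialize (H x ltac:(lra)). eapply Rle_trans. apply Rle_abs. auto.
Qed.

Lemma lim_helper x c N0 W : 0 < W -> 0 <= N0 -> (forall n, x <= (c + N0 * (/2)^n) * W) -> x <= c*W.
Proof.
  intros HW HN H. destruct (Rle_dec x (c*W)) as [?|Hn]; auto. exfalso.
  assert (He : 0 < (x - c*W)/(W*(N0+1))) by (apply Rdiv_lt_0_compat; nra).
  destruct (pow_lt_1_zero (/2) ltac:(rewrite Rabs_right; lra) _ He) as [n Hn'].
  specialize (Hn' n (le_n n)). specialize (H n).
  assert (Hp : 0 <= (/2)^n) by (apply pow_le; lra).
  rewrite Rabs_right in Hn' by lra.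
  apply (Rmult_lt_compat_r (W*(N0+1))) in Hn'; [|nra].
  unfold Rdiv in Hn'. rewrite Rmult_assoc, Rinv_l, Rmult_1_r in Hn' by nra.
  nra.
Qed.

Definition lamM M := 2*(M*M + 2*M) + 1.
Definition Gam M A := 2*(A*(2+M))*exp (lamM M).

Lemma exp_ge1 x : 0 <= x -> 1 <= exp x.
Proof. intros H. rewrite <- exp_0. destruct H. left. apply exp_increasing; auto. subst. lra. Qed.

Lemma gronwall (E : R -> R -> R) (G : R -> R) (a : R -> R -> R) (b : R -> R) (A M tau N0 : R) :
 0 <= A -> 0 < M -> 0 < tau -> 0 <= N0 ->
 (forall s q, T1 (s,q) -> Rabs (a s q) <= M) ->
 (forall x, 0 <= x <= 1 -> Rabs (b x) <= M) ->
 (forall u, 1 <= u -> G u = 0) ->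
 (forall s q, T1 (s,q) -> Rabs (E s q) <= N0) ->
 (forall u, 0 <= u < 1 -> Rabs (G u) <= N0) ->
 (forall s q th, T1 (s,q) -> s <= th <= s+1-q -> ex_RInt (fun r => a r (th-s+q) * E th r) th (th-s+q)) ->
 (forall s q, T1 (s,q) -> ex_RInt (fun th => RInt (fun r => a r (th-s+q) * E th r) th (th-s+q)) s (s+1-q)) ->
 (forall sg, 0 <= sg < 1 -> ex_RInt (fun th => E sg th * b th) sg 1) ->
 (forall s q, T1 (s,q) -> Rabs (E s q) <= A + Rabs (RInt (fun th => RInt (fun r => a r (th-s+q) * E th r) th (th-s+q)) s (s+1-q)) + Rabs (G (s-q+1+tau))) ->
 (forall sg, 0 <= sg < 1 -> Rabs (G sg) <= A + Rabs (RInt (fun th => E sg th * b th) sg 1)) ->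
 (forall s q, T1 (s,q) -> Rabs (E s q) <= Gam M A) /\ (forall u, 0 <= u < 1 -> Rabs (G u) <= Gam M A).
Proof.
  intros HA HM Htau HN0 Ha Hb HG1 HE0 HG0 Ex1 Ex2 Ex3 HK HJ.
  set (lam := lamM M).
  assert (Hlam : 0 < lam) by (unfold lam, lamM; nra).
  assert (Hlam2 : (M*M + 2*M) / lam <= 1/2).
  { apply (Rmult_le_reg_r lam); auto. unfold Rdiv. rewrite Rmult_assoc, Rinv_l, Rmult_1_r by lra. unfold lam, lamM. lra. }
  set (w := fun s => exp (lam * (1 - s))).
  assert (Hw1 : forall s, s <= 1 -> 1 <= w s) by (intros s Hs; apply exp_ge1; unfold w; nra).
  assert (Hw0 : forall s, 0 < w s) by (intros; apply exp_pos).
  assert (Hwm : forall s t, s <= t -> w t <= w s).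
  { intros s t Hst. unfold w. destruct (Rle_lt_or_eq_dec _ _ Hst). left. apply exp_increasing. nra. subst; lra. }
  set (P := fun N => (forall s q, T1 (s,q) -> Rabs (E s q) <= N * w s) /\ (forall u, 0 <= u < 1 -> Rabs (G u) <= N * w u)).
  set (B := A*(2+M)).
  assert (HB : 0 <= B) by (unfold B; nra).
  assert (Step : forall N, 0 <= N -> P N -> P (B + N/2)).
  { intros N HN [PE PG].
    assert (HGw : forall u, 0 <= u -> Rabs (G u) <= N * w u).
    { intros u Hu. destruct (Rlt_dec u 1). apply PG; lra. rewrite HG1 by lra. rewrite Rabs_R0.
      apply Rmult_le_pos; auto. left; auto. }
    assert (Hi : forall s q, T1 (s,q) -> Rabs (RInt (fun th => RInt (fun r => a r (th-s+q) * E th r) th (th-s+q)) s (s+1-q)) <= M*N*w s/lam).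
    { intros s q Hsq'. assert (Hsq := Hsq'). unfold T1 in Hsq; simpl in Hsq. destruct Hsq as [Hs [Hsq Hq]].
      eapply Rle_trans. apply (RInt_abs_le _ (fun t => 0 + (M*N) * exp ((-lam)*t + lam))).
      lra. apply Ex2; auto.
      apply (@ex_RInt_continuous R_CompleteNormedModule). intros z _.
      apply (@continuous_plus R_UniformSpace R_AbsRing R_NormedModule (fun _ => 0)). apply continuous_const.
      apply (@continuous_mult R_UniformSpace R_AbsRing (fun _ => M*N)). apply continuous_const.
      apply (continuous_comp (fun t => -lam*t+lam) exp). 2: apply continuous_exp.
      apply (@continuous_plus R_UniformSpace R_AbsRing R_NormedModule (fun t => -lam*t)). 2: apply continuous_const.
      apply (@continuous_mult R_UniformSpace R_AbsRing (fun _ => -lam)). apply continuous_const. apply continuous_id.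
      - intros th Hth. eapply Rle_trans. apply (RInt_abs_gen _ _ _ (M * (N * w th))).
        apply Ex1; [auto|lra].
        intros r Hr. rewrite Rmin_left in Hr by lra. rewrite Rmax_right in Hr by lra.
        rewrite Rabs_mult. apply Rmult_le_compat; try apply Rabs_pos.
        apply Ha. unfold T1; simpl; lra. apply PE. unfold T1; simpl; lra.
        replace (th - s + q - th) with (q - s) by ring. rewrite Rabs_right by lra.
        replace (-lam*th+lam) with (lam*(1-th)) by ring. fold (w th).
        assert (0 <= M * (N * w th)) by (apply Rmult_le_pos; [lra|apply Rmult_le_pos; auto; left; auto]).
        nra.
      - rewrite RInt_affexp by lra.
        replace (- lam * (s+1-q) + lam) with (lam * (1 - (s+1-q))) by ring.
        replace (- lam * s + lam) with (lam * (1 - s)) by ring. fold (w s) (w (s+1-q)).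
        assert (0 < w (s+1-q)) by auto.
        assert (0 <= M*N) by nra.
        replace (0 * (s + 1 - q - s) + M * N * (w (s + 1 - q) - w s) / - lam) with (M*N*(w s - w (s+1-q))/lam) by (field; lra).
        unfold Rdiv. apply Rmult_le_compat_r. left; apply Rinv_0_lt_compat; auto. nra. }
    assert (KE : forall s q, T1 (s,q) -> Rabs (E s q) <= A + M*N*w s/lam + Rabs (G (s-q+1+tau))).
    { intros s q Hsq. eapply Rle_trans. apply HK; auto. specialize (Hi s q Hsq). lra. }
    assert (Hiii : forall sg, 0 <= sg < 1 -> Rabs (G sg) <= A*(1+M) + (M*M+M)*N*w sg/lam).
    { intros sg Hsg. eapply Rle_trans. apply HJ; auto.
      set (C1 := M*(A + M*N*w sg/lam)). set (C2 := M*N).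
      assert (HC1 : 0 <= C1) by (unfold C1; apply Rmult_le_pos; [lra|]; assert (0 <= M*N*w sg/lam) by (unfold Rdiv; apply Rmult_le_pos; [apply Rmult_le_pos; [nra|left; auto]|left; apply Rinv_0_lt_compat; auto]); lra).
      assert (HC2 : 0 <= C2) by (unfold C2; nra).
      assert (Hint : Rabs (RInt (fun th => E sg th * b th) sg 1) <= RInt (fun t => C1 + C2 * exp (lam*t + (-lam*(sg+tau)))) sg 1).
      { apply RInt_abs_le. lra. apply Ex3; auto.
        apply (@ex_RInt_continuous R_CompleteNormedModule). intros z _.
        apply (@continuous_plus R_UniformSpace R_AbsRing R_NormedModule (fun _ => C1)). apply continuous_const.
        apply (@continuous_mult R_UniformSpace R_AbsRing (fun _ => C2)). apply continuous_const.
        apply (continuous_comp (fun t => lam*t+ (-lam*(sg+tau))) exp). 2: apply continuous_exp.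
        apply (@continuous_plus R_UniformSpace R_AbsRing R_NormedModule (fun t => lam*t)). 2: apply continuous_const.
        apply (@continuous_mult R_UniformSpace R_AbsRing (fun _ => lam)). apply continuous_const. apply continuous_id.
        intros th Hth. rewrite Rabs_mult.
        assert (HT : T1 (sg, th)) by (unfold T1; simpl; lra).
        assert (H1 := KE sg th HT).
        assert (H2 := HGw (sg - th + 1 + tau) ltac:(lra)).
        assert (H3 : w (sg - th + 1 + tau) = exp (lam * th + - lam * (sg + tau))) by (unfold w; f_equal; ring).
        assert (H4 := Hb th ltac:(lra)).
        unfold C1, C2. rewrite <- H3.
        assert (0 <= Rabs (E sg th) <= A + M * N * w sg / lam + N * w (sg - th + 1 + tau)) by (split; [apply Rabs_pos|lra]).
        nra. }
      rewrite RInt_affexp in Hint by lra.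
      assert (Hx : exp (lam * 1 + - lam * (sg + tau)) <= w sg).
      { unfold w. destruct (Rle_lt_or_eq_dec (lam * 1 + - lam * (sg + tau)) (lam * (1 - sg))). nra.
        left; apply exp_increasing; auto. rewrite e; lra. }
      assert (Hy : 0 < exp (lam * sg + - lam * (sg + tau))) by apply exp_pos.
      assert (Hz : C2 * (exp (lam * 1 + - lam * (sg + tau)) - exp (lam * sg + - lam * (sg + tau))) / lam <= C2 * w sg / lam).
      { unfold Rdiv. apply Rmult_le_compat_r. left; apply Rinv_0_lt_compat; auto. nra. }
      assert (Hc : C1 * (1 - sg) <= C1) by nra.
      unfold C1, C2 in *.
      replace (A * (1 + M) + (M * M + M) * N * w sg / lam) with (A + (M * (A + M * N * w sg / lam) + M*N*w sg/lam)) by (field; lra).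
      lra. }
    split.
    - intros s q Hsq'. assert (Hsq := Hsq'). unfold T1 in Hsq; simpl in Hsq. destruct Hsq as [Hs [Hsq Hq]].
      eapply Rle_trans. apply KE; auto.
      assert (HG' : Rabs (G (s - q + 1 + tau)) <= A*(1+M) + (M*M+M)*N*w s/lam).
      { destruct (Rlt_dec (s - q + 1 + tau) 1).
        - eapply Rle_trans. apply Hiii; lra.
          apply Rplus_le_compat_l. unfold Rdiv. apply Rmult_le_compat_r. left; apply Rinv_0_lt_compat; auto.
          apply Rmult_le_compat_l. nra. apply Hwm. lra.
        - rewrite HG1 by lra. rewrite Rabs_R0.
          assert (0 <= (M * M + M) * N * w s / lam) by (unfold Rdiv; apply Rmult_le_pos; [apply Rmult_le_pos; [nra|left; auto]|left; apply Rinv_0_lt_compat; auto]).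
          nra. }
      assert (Hws := Hw1 s ltac:(lra)).
      assert (Q : (M*M + 2*M)*N*w s/lam <= N/2 * w s).
      { replace ((M*M + 2*M)*N*w s/lam) with ((M*M + 2*M)/lam * (N * w s)) by (field; lra).
        replace (N/2 * w s) with (1/2 * (N * w s)) by field.
        apply Rmult_le_compat_r; auto. apply Rmult_le_pos; auto; lra. }
      replace (M*N*w s/lam) with (M*N*w s/lam) by ring.
      assert (A + M * N * w s / lam + (A * (1 + M) + (M * M + M) * N * w s / lam) = B + (M*M + 2*M)*N*w s/lam) by (unfold B; field; lra).
      unfold B in *. nra.
    - intros u Hu. eapply Rle_trans. apply Hiii; auto.
      assert (Hws := Hw1 u ltac:(lra)).
      assert (Q : (M*M + M)*N*w u/lam <= N/2 * w u).
      { replace ((M*M + M)*N*w u/lam) with ((M*M + M)/lam * (N * w u)) by (field; lra).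
        replace (N/2 * w u) with (1/2 * (N * w u)) by field.
        apply Rmult_le_compat_r. apply Rmult_le_pos; auto; lra.
        eapply Rle_trans; [|exact Hlam2]. unfold Rdiv. apply Rmult_le_compat_r. left; apply Rinv_0_lt_compat; auto. lra. }
      assert (0 <= A*(2+M)*(w u - 1)) by (apply Rmult_le_pos; nra). unfold B. nra. }
  assert (Iter : forall n, P (2*B + N0 * (/2)^n)).
  { induction n.
    - simpl. split.
      + intros s q Hsq. eapply Rle_trans. apply HE0; auto. unfold T1 in Hsq; simpl in Hsq. destruct Hsq as [? [? ?]].
        assert (Hws := Hw1 s ltac:(lra)). nra.
      + intros u Hu. eapply Rle_trans. apply HG0; auto. assert (Hws := Hw1 u ltac:(lra)). nra.
    - replace (2 * B + N0 * (/ 2) ^ S n) with (B + (2 * B + N0 * (/ 2) ^ n)/2) by (simpl; field).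
      apply Step; auto. assert (0 <= (/2)^n) by (apply pow_le; lra). nra. }
  assert (HwL : forall s, 0 <= s -> w s <= exp lam).
  { intros s Hs. unfold w. destruct (Rle_lt_or_eq_dec (lam * (1-s)) lam). nra. left; apply exp_increasing; auto. rewrite e; lra. }
  unfold Gam. fold lam. fold B. split.
  - intros s q Hsq. assert (Hs : 0 <= s) by (unfold T1 in Hsq; simpl in Hsq; destruct Hsq; auto).
    assert (X : Rabs (E s q) <= 2*B * w s).
    { apply (lim_helper _ _ N0); auto. intros n. destruct (Iter n) as [I1 _]. apply I1; auto. }
    assert (Y := HwL s Hs). nra.
  - intros u Hu.
    assert (X : Rabs (G u) <= 2*B * w u).
    { apply (lim_helper _ _ N0); auto. intros n. destruct (Iter n) as [_ I2]. apply I2; auto. }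
    assert (Y := HwL u ltac:(lra)). nra.
Qed.

Definition Fo (f : R -> R -> R) s q := RInt (fun th => f th (th-s+q)) s (s+1-q).
Definition Io (f X : R -> R -> R) s q := RInt (fun th => RInt (fun r => f r (th-s+q) * X th r) th (th-s+q)) s (s+1-q).

Lemma lin_cont (s q : R) x : cR (fun th => th - s + q) x.
Proof. apply cR_plus. apply cR_minus. apply cR_id. apply cR_const. apply cR_const. Qed.

Lemma inner_C2 f X s q : C2 f -> C2 X -> C2 (fun th r => f r (th - s + q) * X th r).
Proof.
  intros Hf HX. apply C2_mult; auto.
  apply (C2_comp2 f (fun th r => r) (fun th r => th - s + q)); auto. apply C2_snd.
  apply C2_lift1. apply lin_cont.
Qed.

Lemma Io_ex_in f X s q th : C2 f -> C2 X -> forall a b, ex_RInt (fun r => f r (th-s+q) * X th r) a b.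
Proof. intros Hf HX a b. apply ex_RInt_cont. intros x. apply (C2_sec2 (fun th r => f r (th - s + q) * X th r)). apply inner_C2; auto. Qed.

Lemma Io_ex_out f X s q : C2 f -> C2 X -> forall a b,
  ex_RInt (fun th => RInt (fun r => f r (th-s+q) * X th r) th (th-s+q)) a b.
Proof.
  intros Hf HX a b. apply ex_RInt_cont. intros x.
  apply (PIC (fun th r => f r (th - s + q) * X th r) (fun th => th) (fun th => th - s + q)).
  apply inner_C2; auto. apply cR_id. apply lin_cont.
Qed.

Lemma Fo_ex f s q : C2 f -> forall a b, ex_RInt (fun th => f th (th-s+q)) a b.
Proof. intros Hf a b. apply ex_RInt_cont. intros x. apply (C2_comp f (fun th => th) (fun th => th - s + q)); auto. apply cR_id. apply lin_cont. Qed.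

Lemma Jfun_Kt K c sg : 0 <= sg -> Jfun K c sg = Jfun (Kt K) c sg.
Proof.
  intros Hs. unfold Jfun. destruct (Rlt_dec sg 1); auto. f_equal.
  apply RInt_ext. intros x Hx. rewrite Rmin_left in Hx by lra. rewrite Rmax_right in Hx by lra.
  rewrite Kt_T1; auto. unfold T1; simpl; lra.
Qed.

Lemma Kt_eq tau f c K : is_kernel tau f c K -> 0 < tau -> forall s q, T1 (s,q) ->
  Kt K s q = - Fo f s q + Io f (Kt K) s q + Jfun (Kt K) c (s-q+1+tau).
Proof.
  intros [_ HK] Htau s q Hsq. rewrite Kt_T1 by auto. rewrite (HK s q Hsq).
  assert (H := Hsq). unfold T1 in H; simpl in H.
  unfold Fo, Io. f_equal. f_equal.
  - apply RInt_ext. intros th Hth. rewrite Rmin_left in Hth by lra. rewrite Rmax_right in Hth by lra.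
    apply RInt_ext. intros r Hr. rewrite Rmin_left in Hr by lra. rewrite Rmax_right in Hr by lra.
    rewrite Kt_T1; auto. unfold T1; simpl; lra.
  - unfold Jfun. destruct (Rlt_dec (s + tau) q); destruct (Rlt_dec (s - q + 1 + tau) 1); try lra.
    assert (E : RInt (fun th => c th * K (s - q + 1 + tau) th) (s - q + 1 + tau) 1 =
                RInt (fun q0 => Kt K (s - q + 1 + tau) q0 * c q0) (s - q + 1 + tau) 1).
    { apply RInt_ext. intros x Hx. rewrite Rmin_left in Hx by lra. rewrite Rmax_right in Hx by lra.
      assert (HT : T1 (s - q + 1 + tau, x)) by (unfold T1; simpl; lra). rewrite (Kt_T1 K _ _ HT). apply Rmult_comm. }
    rewrite E. ring.
Qed.

Lemma Fo_bound f fs fq M s q : C2 f -> C1_norm_le_T1 f fs fq M -> T1 (s,q) -> Rabs (Fo f s q) <= M.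
Proof.
  intros Hf HM Hsq. assert (H := Hsq). unfold T1 in H; simpl in H.
  unfold Fo. eapply Rle_trans. apply (RInt_abs_gen _ _ _ M). apply Fo_ex; auto.
  intros t Ht. rewrite Rmin_left in Ht by lra. rewrite Rmax_right in Ht by lra.
  apply (HM t (t - s + q)). unfold T1; simpl; lra.
  assert (0 <= M).
  { destruct (HM 0 0) as [X _]. unfold T1; simpl; lra. generalize (Rabs_pos (f 0 0)); lra. }
  replace (s + 1 - q - s) with (1 - q) by ring. rewrite Rabs_right by lra. nra.
Qed.

Lemma Jfun_G1 X c u : 1 <= u -> Jfun X c u = 0.
Proof. intros H. unfold Jfun. destruct (Rlt_dec u 1); auto; lra. Qed.

Lemma Jfun_lt X c u : u < 1 -> Jfun X c u = RInt (fun q => X u q * c q) u 1 - c u.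
Proof. intros H. unfold Jfun. destruct (Rlt_dec u 1); auto; lra. Qed.

Lemma Ex3_lem X c sg : C2 X -> (forall x, cR c x) -> forall a b, ex_RInt (fun th => X sg th * c th) a b.
Proof. intros HX Hc a b. apply ex_RInt_cont. intros x. apply cR_mult; auto. apply C2_sec2; auto. Qed.

Lemma K_bound tau f fs fq c dc K M : 0 < tau -> 0 < M -> C1_2 f fs fq -> C1_1 c dc ->
  C1_norm_le_T1 f fs fq M -> C1_norm_le_01 c dc M -> is_kernel tau f c K ->
  (forall s q, T1 (s,q) -> Rabs (Kt K s q) <= Gam M M) /\
  (forall u, 0 <= u < 1 -> Rabs (Jfun (Kt K) c u) <= Gam M M).
Proof.
  intros Htau HM Hf Hc HfM HcM HK.
  assert (Cf := f_C2 _ _ _ Hf). assert (Cc := c_cont _ _ Hc).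
  assert (CK : C2 (Kt K)) by (apply Kt_C2; apply HK).
  destruct (C2_bounded (Kt K) 0 1 0 1 CK ltac:(lra) ltac:(lra)) as [B0 HB0].
  set (B1 := Rabs B0).
  assert (HB1 : forall s q, T1 (s,q) -> Rabs (Kt K s q) <= B1).
  { intros s q H. unfold T1 in H; simpl in H. eapply Rle_trans. apply HB0; lra. apply Rle_abs. }
  assert (HB1p : 0 <= B1) by apply Rabs_pos.
  apply (gronwall _ _ f c M M tau (B1 + B1*M + M)); try lra.
  - nra.
  - intros s q H. apply (HfM s q H).
  - intros x H. apply (HcM x H).
  - apply Jfun_G1.
  - intros s q H. assert (0 <= B1 * M) by nra. specialize (HB1 s q H). lra.
  - intros u Hu. rewrite Jfun_lt by lra. unfold Rminus. eapply Rle_trans. apply Rabs_triang.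
    rewrite Rabs_Ropp. apply Rplus_le_compat.
    + eapply Rle_trans. apply (RInt_abs_gen _ _ _ (B1 * M)). apply Ex3_lem; auto.
      intros t Ht. rewrite Rmin_left in Ht by lra. rewrite Rmax_right in Ht by lra.
      rewrite Rabs_mult. apply Rmult_le_compat; try apply Rabs_pos. apply HB1. unfold T1; simpl; lra.
      apply HcM; lra.
      rewrite Rabs_right by lra. assert (0 <= B1 * M) by nra. nra.
    + apply HcM; lra.
  - intros s q th _ _. apply Io_ex_in; auto.
  - intros s q _. apply Io_ex_out; auto.
  - intros sg _. apply Ex3_lem; auto.
  - intros s q H. rewrite (Kt_eq tau f c K HK Htau s q H). fold (Io f (Kt K) s q).
    eapply Rle_trans. apply Rabs_triang. apply Rplus_le_compat_r.
    eapply Rle_trans. apply Rabs_triang. rewrite Rabs_Ropp. apply Rplus_le_compat_r.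
    apply (Fo_bound f fs fq); auto.
  - intros sg Hsg. rewrite Jfun_lt by lra. unfold Rminus. eapply Rle_trans. apply Rabs_triang.
    rewrite Rabs_Ropp. rewrite Rplus_comm. apply Rplus_le_compat_r. apply HcM; lra.
Qed.

Lemma inner_bound f X M BK s q th : C2 f -> C2 X -> 0 <= M -> 0 <= BK ->
  (forall s q, T1 (s,q) -> Rabs (f s q) <= M) -> (forall s q, T1 (s,q) -> Rabs (X s q) <= BK) ->
  T1 (s,q) -> s <= th <= s + 1 - q ->
  Rabs (RInt (fun r => f r (th-s+q) * X th r) th (th-s+q)) <= M * BK.
Proof.
  intros Hf HX HM HB Hfb HXb Hsq Hth. assert (H := Hsq). unfold T1 in H; simpl in H.
  eapply Rle_trans. apply (RInt_abs_gen _ _ _ (M * BK)). apply Io_ex_in; auto.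
  intros r Hr. rewrite Rmin_left in Hr by lra. rewrite Rmax_right in Hr by lra.
  rewrite Rabs_mult. apply Rmult_le_compat; try apply Rabs_pos. apply Hfb; unfold T1; simpl; lra.
  apply HXb; unfold T1; simpl; lra.
  replace (th - s + q - th) with (q - s) by ring. rewrite Rabs_right by lra.
  assert (0 <= M * BK) by nra. nra.
Qed.

Lemma K_diag tau f fs fq c dc K M : 0 < tau -> 0 < M -> C1_2 f fs fq -> C1_1 c dc ->
  C1_norm_le_T1 f fs fq M -> C1_norm_le_01 c dc M -> is_kernel tau f c K ->
  forall s q h, T1 (s,q) -> 0 <= h -> q + h <= 1 ->
  Rabs (Kt K s q - Kt K (s+h) (q+h)) <= (M + M * Gam M M) * h.
Proof.
  intros Htau HM Hf Hc HfM HcM HK s q h Hsq Hh Hqh.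
  assert (Cf := f_C2 _ _ _ Hf). assert (Cc := c_cont _ _ Hc).
  assert (CK : C2 (Kt K)) by (apply Kt_C2; apply HK).
  destruct (K_bound tau f fs fq c dc K M) as [BK1 _]; auto.
  assert (HBK : 0 <= Gam M M) by (eapply Rle_trans; [apply Rabs_pos|apply (BK1 0 0)]; unfold T1; simpl; lra).
  assert (H := Hsq). unfold T1 in H; simpl in H.
  assert (Hsq2 : T1 (s+h, q+h)) by (unfold T1; simpl; lra).
  rewrite (Kt_eq tau f c K HK Htau s q Hsq), (Kt_eq tau f c K HK Htau _ _ Hsq2).
  replace (s + h - (q + h) + 1 + tau) with (s - q + 1 + tau) by ring.
  assert (EF : Fo f (s+h) (q+h) = RInt (fun th => f th (th-s+q)) (s+h) (s+1-q)).
  { unfold Fo. replace (s + h + 1 - (q + h)) with (s+1-q) by ring. apply RInt_ext. intros x _.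
    f_equal. ring. }
  assert (EI : Io f (Kt K) (s+h) (q+h) = RInt (fun th => RInt (fun r => f r (th-s+q) * Kt K th r) th (th-s+q)) (s+h) (s+1-q)).
  { unfold Io. replace (s + h + 1 - (q + h)) with (s+1-q) by ring. apply RInt_ext. intros x _.
    replace (x - (s + h) + (q + h)) with (x - s + q) by ring. reflexivity. }
  rewrite EF, EI.
  assert (CF := RInt_Chasles (V:=R_CompleteNormedModule) (fun th => f th (th-s+q)) s (s+h) (s+1-q) (Fo_ex _ _ _ Cf _ _) (Fo_ex _ _ _ Cf _ _)).
  assert (CI := RInt_Chasles (V:=R_CompleteNormedModule) (fun th => RInt (fun r => f r (th-s+q) * Kt K th r) th (th-s+q)) s (s+h) (s+1-q) (Io_ex_out _ _ _ _ Cf CK _ _) (Io_ex_out _ _ _ _ Cf CK _ _)).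
  unfold plus in CF, CI; simpl in CF, CI. unfold Fo, Io. rewrite <- CF, <- CI.
  match goal with |- Rabs ?e <= _ => replace e with (- RInt (fun th => f th (th-s+q)) s (s+h) + RInt (fun th => RInt (fun r => f r (th-s+q) * Kt K th r) th (th-s+q)) s (s+h)) by ring end.
  eapply Rle_trans. apply Rabs_triang. rewrite Rabs_Ropp.
  assert (B1 : Rabs (RInt (fun th => f th (th-s+q)) s (s+h)) <= Rabs (s + h - s) * M).
  { apply RInt_abs_gen. apply Fo_ex; auto. intros t Ht. rewrite Rmin_left in Ht by lra. rewrite Rmax_right in Ht by lra.
    apply (HfM t (t-s+q)). unfold T1; simpl; lra. }
  assert (B2 : Rabs (RInt (fun th => RInt (fun r => f r (th-s+q) * Kt K th r) th (th-s+q)) s (s+h)) <= Rabs (s + h - s) * (M * Gam M M)).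
  { apply RInt_abs_gen. apply Io_ex_out; auto. intros t Ht. rewrite Rmin_left in Ht by lra. rewrite Rmax_right in Ht by lra.
    apply inner_bound; auto; try lra. intros a b Hab. apply (HfM a b Hab). }
  replace (s + h - s) with h in B1, B2 by ring. rewrite (Rabs_right h) in B1, B2 by lra. lra.
Qed.

Definition LJ0 M := M * (M + M * Gam M M) + 2 * Gam M M * M + M.

Lemma J_lip_core tau f fs fq c dc K M : 0 < tau -> 0 < M -> C1_2 f fs fq -> C1_1 c dc -> c 1 = 0 ->
  C1_norm_le_T1 f fs fq M -> C1_norm_le_01 c dc M -> is_kernel tau f c K ->
  forall x y, 0 <= x <= y -> Rabs (Jfun (Kt K) c x - Jfun (Kt K) c y) <= LJ0 M * (y - x).
Proof.
  intros Htau HM Hf Hc Hc1 HfM HcM HK x y Hxy.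
  assert (Cf := f_C2 _ _ _ Hf). assert (Cc := c_cont _ _ Hc).
  assert (CK : C2 (Kt K)) by (apply Kt_C2; apply HK).
  destruct (K_bound tau f fs fq c dc K M) as [BK1 _]; auto.
  set (BK := Gam M M) in *.
  assert (HBK : 0 <= BK) by (eapply Rle_trans; [apply Rabs_pos|apply (BK1 0 0)]; unfold T1; simpl; lra).
  assert (Hdiag := K_diag tau f fs fq c dc K M Htau HM Hf Hc HfM HcM HK). fold BK in Hdiag.
  assert (Hclip := c_lip c dc M Hc HcM).
  assert (HcM' : forall t, 0 <= t <= 1 -> Rabs (c t) <= M) by (intros t Ht; apply (HcM t Ht)).
  assert (Ex := fun sg => Ex3_lem (Kt K) c sg CK Cc).
  unfold LJ0. fold BK.
  destruct (Rlt_dec y 1) as [Hy|Hy].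
  2:{ rewrite (Jfun_G1 _ _ y) by lra. rewrite Rminus_0_r.
      destruct (Rlt_dec x 1) as [Hx|Hx].
      2:{ rewrite Jfun_G1 by lra. rewrite Rabs_R0. assert (0 <= BK * M) by nra. assert (0 <= M*(M+M*BK)) by nra. apply Rmult_le_pos; lra. }
      rewrite Jfun_lt by lra. unfold Rminus at 1. eapply Rle_trans. apply Rabs_triang.
      assert (X1 : Rabs (RInt (fun q => Kt K x q * c q) x 1) <= Rabs (1 - x) * (BK * M)).
      { apply RInt_abs_gen. apply Ex; auto. intros t Ht. rewrite Rmin_left in Ht by lra. rewrite Rmax_right in Ht by lra.
        rewrite Rabs_mult. apply Rmult_le_compat; try apply Rabs_pos. apply BK1. unfold T1; simpl; lra. apply HcM'; lra. }
      assert (X2 : Rabs (- c x) <= M * (1 - x)).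
      { rewrite Rabs_Ropp. replace (c x) with (c x - c 1) by (rewrite Hc1; ring).
        eapply Rle_trans. apply Hclip; lra. rewrite Rabs_left1 by lra. lra. }
      rewrite (Rabs_right (1-x)) in X1 by lra.
      assert (0 <= M * (M + M * BK)) by nra. assert (0 <= BK * M) by nra. nra. }
  set (h := y - x). assert (Hh : 0 <= h) by (unfold h; lra).
  replace y with (x + h) in * by (unfold h; ring). clearbody h.
  rewrite !Jfun_lt by lra.
  assert (E1 : RInt (fun q => Kt K (x+h) q * c q) (x+h) 1 = RInt (fun u => Kt K (x+h) (u+h) * c (u+h)) x (1-h)).
  { assert (E := RInt_comp_lin (V:=R_CompleteNormedModule) (fun q => Kt K (x+h) q * c q) 1 h x (1-h) (Ex _ _ _)).
    replace (1*x+h) with (x+h) in E by ring. replace (1*(1-h)+h) with 1 in E by ring.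
    rewrite <- E. apply RInt_ext. intros u _. unfold scal; simpl; unfold mult; simpl. rewrite Rmult_1_l.
    replace (1*u+h) with (u+h) by ring. reflexivity. }
  assert (E2 := RInt_Chasles (V:=R_CompleteNormedModule) (fun q => Kt K x q * c q) x (1-h) 1 (Ex _ _ _) (Ex _ _ _)).
  unfold plus in E2; simpl in E2.
  assert (Exs : ex_RInt (fun u => Kt K (x+h) (u+h) * c (u+h)) x (1-h)).
  { apply ex_RInt_cont. intros z. apply cR_mult.
    apply (C2_comp (Kt K) (fun _ => x+h) (fun u => u + h)); auto. apply cR_const. apply cR_plus. apply cR_id. apply cR_const.
    apply (continuous_comp (fun u => u+h) c). apply cR_plus. apply cR_id. apply cR_const. apply Cc. }
  assert (E3 := RInt_minus (V:=R_CompleteNormedModule) (fun q => Kt K x q * c q) (fun u => Kt K (x+h) (u+h) * c (u+h)) x (1-h) (Ex _ _ _) Exs).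
  unfold minus, plus, opp in E3; simpl in E3.
  rewrite E1, <- E2.
  match goal with |- Rabs ?e <= _ => replace e with
    (RInt (fun q => Kt K x q * c q + - (Kt K (x+h) (q+h) * c (q+h))) x (1-h) + RInt (fun q => Kt K x q * c q) (1-h) 1 - (c x - c (x+h))) end.
  2:{ rewrite E3. ring. }
  assert (X1 : Rabs (RInt (fun q => Kt K x q * c q + - (Kt K (x+h) (q+h) * c (q+h))) x (1-h)) <= Rabs (1 - h - x) * ((M + M*BK) * h * M + BK * (M * h))).
  { apply RInt_abs_gen. apply (ex_RInt_plus (V:=R_NormedModule) _ (fun q => - (Kt K (x+h) (q+h) * c (q+h)))). apply Ex.
    apply (ex_RInt_opp (V:=R_NormedModule)). exact Exs.
    intros t Ht. rewrite Rmin_left in Ht by lra. rewrite Rmax_right in Ht by lra.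
    replace (Kt K x t * c t + - (Kt K (x + h) (t + h) * c (t + h))) with
      ((Kt K x t - Kt K (x+h) (t+h)) * c t + Kt K (x+h) (t+h) * (c t - c (t+h))) by ring.
    eapply Rle_trans. apply Rabs_triang. rewrite !Rabs_mult. apply Rplus_le_compat.
    - apply Rmult_le_compat; try apply Rabs_pos. apply Hdiag. unfold T1; simpl; lra. lra. lra. apply HcM'; lra.
    - apply Rmult_le_compat; try apply Rabs_pos. apply BK1. unfold T1; simpl; lra.
      eapply Rle_trans. apply Hclip; lra. replace (t - (t+h)) with (-h) by ring. rewrite Rabs_Ropp, Rabs_right by lra. lra. }
  assert (X2 : Rabs (RInt (fun q => Kt K x q * c q) (1-h) 1) <= Rabs (1 - (1-h)) * (BK * M)).
  { apply RInt_abs_gen. apply Ex; auto. intros t Ht. rewrite Rmin_left in Ht by lra. rewrite Rmax_right in Ht by lra.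
    rewrite Rabs_mult. apply Rmult_le_compat; try apply Rabs_pos. apply BK1. unfold T1; simpl; lra. apply HcM'; lra. }
  assert (X3 : Rabs (c x - c (x+h)) <= M * h).
  { eapply Rle_trans. apply Hclip; lra. replace (x - (x+h)) with (-h) by ring. rewrite Rabs_Ropp, Rabs_right by lra. lra. }
  replace (1 - (1-h)) with h in X2 by ring. rewrite (Rabs_right h) in X2 by lra.
  rewrite (Rabs_right (1-h-x)) in X1 by lra.
  assert (Q : (1 - h - x) * ((M + M * BK) * h * M + BK * (M * h)) <= (M + M * BK) * h * M + BK * (M * h)).
  { assert (0 <= (M + M*BK)*h*M) by (apply Rmult_le_pos; [apply Rmult_le_pos; nra | lra]).
    assert (0 <= BK*(M*h)) by (apply Rmult_le_pos; nra).
    nra. }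
  replace (x + h - x) with h by ring.
  unfold Rminus at 1. eapply Rle_trans. apply Rabs_triang. rewrite Rabs_Ropp.
  eapply Rle_trans. apply Rplus_le_compat_r. apply Rabs_triang. nra.
Qed.

Lemma J_lip tau f fs fq c dc K M : 0 < tau -> 0 < M -> C1_2 f fs fq -> C1_1 c dc -> c 1 = 0 ->
  C1_norm_le_T1 f fs fq M -> C1_norm_le_01 c dc M -> is_kernel tau f c K ->
  forall x y, 0 <= x -> 0 <= y -> Rabs (Jfun (Kt K) c x - Jfun (Kt K) c y) <= LJ0 M * Rabs (x - y).
Proof.
  intros H1 H2 H3 H4 H5 H6 H7 H8 x y Hx Hy.
  assert (C := J_lip_core tau f fs fq c dc K M H1 H2 H3 H4 H5 H6 H7 H8).
  destruct (Rle_dec x y).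
  - rewrite (Rabs_left1 (x - y)) by lra. replace (- (x - y)) with (y - x) by ring. apply C; lra.
  - rewrite (Rabs_minus_sym (Jfun (Kt K) c x)). rewrite (Rabs_right (x - y)) by lra. apply C. lra.
Qed.

Lemma Gam_pos M A : 0 < M -> 0 < A -> 0 < Gam M A.
Proof. intros. unfold Gam. assert (0 < exp (lamM M)) by apply exp_pos. apply Rmult_lt_0_compat; [|auto]. nra. Qed.

Lemma Gam_lin M d X : Gam M (d * X) = d * Gam M X.
Proof. unfold Gam. ring. Qed.

Theorem lemma1 :
  forall taubar M : R, 0 < taubar -> 0 < M ->
  exists LK LJ LL : R, 0 < LK /\ 0 < LJ /\ 0 < LL /\
  forall (tau1 tau2 eta1 eta2 : R)
         (f1 f1s f1q f2 f2s f2q : R -> R -> R)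
         (c1 dc1 c2 dc2 : R -> R)
         (K1 K2 : R -> R -> R),
    0 < tau1 <= taubar -> 0 < tau2 <= taubar ->
    0 < eta1 < tau1 -> 0 < eta2 < tau2 ->
    C1_2 f1 f1s f1q -> C1_2 f2 f2s f2q ->
    C1_1 c1 dc1 -> C1_1 c2 dc2 -> c1 1 = 0 -> c2 1 = 0 ->
    C1_norm_le_T1 f1 f1s f1q M -> C1_norm_le_T1 f2 f2s f2q M ->
    C1_norm_le_01 c1 dc1 M -> C1_norm_le_01 c2 dc2 M ->
    is_kernel tau1 f1 c1 K1 -> is_kernel tau2 f2 c2 K2 ->
    (* d dominates every quantity inside the max on the right-hand sides *)
    forall d : R,
      Rabs (tau1 - tau2) <= d ->
      (forall s q, T1 (s, q) -> Rabs (f1 s q - f2 s q) <= d) ->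
      (forall x, 0 <= x <= 1 -> Rabs (c1 x - c2 x) <= d) ->
      (forall s q, T1 (s, q) -> Rabs (K1 s q - K2 s q) <= LK * d) /\
      (Rabs (eta1 - eta2) <= d ->
       forall phi, 0 <= phi <= 1 ->
         Rabs (Lfun K1 c1 eta1 phi - Lfun K2 c2 eta2 phi) <= LL * d) /\
      (forall sigma, 0 <= sigma <= 1 ->
         Rabs (Jfun K1 c1 sigma - Jfun K2 c2 sigma) <= LJ * d).
Proof.
  intros taubar M Htb HM.
  set (BK := Gam M M). set (L0 := LJ0 M).
  assert (HBK : 0 < BK) by (apply Gam_pos; lra).
  assert (HL0 : 0 < L0).
  { unfold L0, LJ0. fold BK. assert (0 < M * BK) by nra. assert (0 < M * (M + M*BK)) by nra. nra. }
  set (LKc := Gam M (1 + BK + L0)).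
  assert (HLK : 0 < LKc) by (apply Gam_pos; lra).
  exists LKc, LKc, (LKc + L0). split; [auto|split; [auto|split; [lra|]]].
  intros tau1 tau2 eta1 eta2 f1 f1s f1q f2 f2s f2q c1 dc1 c2 dc2 K1 K2
    Ht1 Ht2 He1 He2 Hf1 Hf2 Hc1 Hc2 Hc11 Hc21 Hf1M Hf2M Hc1M Hc2M HK1 HK2 d Htd Hfd Hcd.
  assert (Hd : 0 <= d) by (eapply Rle_trans; [apply Rabs_pos|exact Htd]).
  assert (Cf1 := f_C2 _ _ _ Hf1). assert (Cc1 := c_cont _ _ Hc1).
  assert (Cf2 := f_C2 _ _ _ Hf2). assert (Cc2 := c_cont _ _ Hc2).
  assert (CK1 : C2 (Kt K1)) by (apply Kt_C2; apply HK1).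
  assert (CK2 : C2 (Kt K2)) by (apply Kt_C2; apply HK2).
  destruct (K_bound tau1 f1 f1s f1q c1 dc1 K1 M) as [B1K B1J]; try tauto.
  destruct (K_bound tau2 f2 f2s f2q c2 dc2 K2 M) as [B2K B2J]; try tauto.
  fold BK in B1K, B1J, B2K, B2J.
  assert (Lip2 := J_lip tau2 f2 f2s f2q c2 dc2 K2 M ltac:(lra) HM Hf2 Hc2 Hc21 Hf2M Hc2M HK2). fold L0 in Lip2.
  set (E := fun s q => Kt K1 s q - Kt K2 s q).
  set (G := fun u => Jfun (Kt K1) c1 u - Jfun (Kt K2) c2 u).
  assert (CE : C2 E) by (apply C2_minus; auto).
  set (A := d * (1 + BK + L0)).
  assert (HA : 0 <= A) by (unfold A; apply Rmult_le_pos; lra).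
  assert (Main : (forall s q, T1 (s,q) -> Rabs (E s q) <= Gam M A) /\ (forall u, 0 <= u < 1 -> Rabs (G u) <= Gam M A)).
  { apply (gronwall E G f1 c1 A M tau1 (2*BK)); try lra.
    - intros s q H. apply (Hf1M s q H).
    - intros x H. apply (Hc1M x H).
    - intros u Hu. unfold G. rewrite !Jfun_G1 by lra. ring.
    - intros s q H. unfold E. unfold Rminus. eapply Rle_trans. apply Rabs_triang. rewrite Rabs_Ropp.
      specialize (B1K s q H). specialize (B2K s q H). lra.
    - intros u Hu. unfold G. unfold Rminus. eapply Rle_trans. apply Rabs_triang. rewrite Rabs_Ropp.
      specialize (B1J u Hu). specialize (B2J u Hu). lra.
    - intros s q th _ _. apply Io_ex_in; auto.
    - intros s q _. apply Io_ex_out; auto.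
    - intros sg _. apply Ex3_lem; auto.
    -
      intros s q Hsq. assert (H := Hsq). unfold T1 in H; simpl in H.
      unfold E at 1. rewrite (Kt_eq tau1 f1 c1 K1 HK1 ltac:(lra) s q Hsq), (Kt_eq tau2 f2 c2 K2 HK2 ltac:(lra) s q Hsq).
      set (D := RInt (fun th => RInt (fun r => (f1 r (th-s+q) - f2 r (th-s+q)) * Kt K2 th r) th (th-s+q)) s (s+1-q)).
      set (FD := RInt (fun th => f1 th (th-s+q) - f2 th (th-s+q)) s (s+1-q)).
      assert (EIo : Io f1 (Kt K1) s q - Io f2 (Kt K2) s q = Io f1 E s q + D).
      { unfold Io, D.
        assert (CD : C2 (fun x y => f1 x y - f2 x y)) by (apply C2_minus; auto).
        assert (ExD := Io_ex_out (fun x y => f1 x y - f2 x y) (Kt K2) s q CD CK2 s (s+1-q)).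
        assert (R1 := RInt_minus (V:=R_CompleteNormedModule) _ _ s (s+1-q) (Io_ex_out f1 (Kt K1) s q Cf1 CK1 s (s+1-q)) (Io_ex_out f2 (Kt K2) s q Cf2 CK2 s (s+1-q))).
        assert (R2 := RInt_plus (V:=R_CompleteNormedModule) _ _ s (s+1-q) (Io_ex_out f1 E s q Cf1 CE s (s+1-q)) ExD).
        unfold minus, plus, opp in R1, R2; simpl in R1, R2.
        unfold Rminus. etransitivity. symmetry. exact R1. etransitivity; [|exact R2]. apply RInt_ext. intros th _.
        assert (S1 := RInt_minus (V:=R_CompleteNormedModule) _ _ th (th-s+q) (Io_ex_in f1 (Kt K1) s q th Cf1 CK1 th (th-s+q)) (Io_ex_in f2 (Kt K2) s q th Cf2 CK2 th (th-s+q))).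
        assert (S2 := RInt_plus (V:=R_CompleteNormedModule) _ _ th (th-s+q) (Io_ex_in f1 E s q th Cf1 CE th (th-s+q)) (Io_ex_in _ (Kt K2) s q th CD CK2 th (th-s+q))).
        unfold minus, plus, opp in S1, S2; simpl in S1, S2. simpl.
        etransitivity. symmetry. exact S1. etransitivity; [|exact S2]. apply RInt_ext. intros r _. unfold E. simpl. ring. }
      assert (EFo : Fo f1 s q - Fo f2 s q = FD).
      { unfold Fo, FD. assert (R1 := RInt_minus (V:=R_CompleteNormedModule) _ _ s (s+1-q) (Fo_ex f1 s q Cf1 s (s+1-q)) (Fo_ex f2 s q Cf2 s (s+1-q))).
        unfold minus, plus, opp in R1; simpl in R1. unfold Rminus. symmetry. exact R1. }
      assert (BFD : Rabs FD <= d).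
      { unfold FD. eapply Rle_trans. apply (RInt_abs_gen _ _ _ d).
        apply ex_RInt_cont. intros x. apply cR_minus; apply (C2_comp _ (fun th => th) (fun th => th - s + q)); auto; (apply cR_id || apply lin_cont).
        intros t Ht. rewrite Rmin_left in Ht by lra. rewrite Rmax_right in Ht by lra. apply Hfd. unfold T1; simpl; lra.
        replace (s+1-q-s) with (1-q) by ring. rewrite Rabs_right by lra. nra. }
      assert (BD : Rabs D <= d * BK).
      { unfold D. eapply Rle_trans. apply (RInt_abs_gen _ _ _ (d * BK)).
        apply (Io_ex_out (fun x y => f1 x y - f2 x y) (Kt K2) s q); auto. apply C2_minus; auto.
        intros t Ht. rewrite Rmin_left in Ht by lra. rewrite Rmax_right in Ht by lra.
        apply (inner_bound (fun x y => f1 x y - f2 x y) (Kt K2) d BK s q t); auto; try lra. apply C2_minus; auto.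
        replace (s+1-q-s) with (1-q) by ring. rewrite Rabs_right by lra. assert (0 <= d*BK) by nra. nra. }
      assert (BJ : Rabs (Jfun (Kt K2) c2 (s - q + 1 + tau1) - Jfun (Kt K2) c2 (s - q + 1 + tau2)) <= L0 * d).
      { eapply Rle_trans. apply Lip2; lra. replace (s - q + 1 + tau1 - (s - q + 1 + tau2)) with (tau1 - tau2) by ring.
        apply Rmult_le_compat_l; lra. }
      match goal with |- Rabs ?e <= _ => replace e with
        (- FD + Io f1 E s q + D + G (s - q + 1 + tau1) + (Jfun (Kt K2) c2 (s - q + 1 + tau1) - Jfun (Kt K2) c2 (s - q + 1 + tau2))) end.
      2:{ rewrite <- EFo. unfold G. lra. }
      unfold A. unfold Io at 1.
      set (IE := RInt (fun th => RInt (fun r => f1 r (th - s + q) * E th r) th (th - s + q)) s (s + 1 - q)).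
      fold IE. set (GG := G (s - q + 1 + tau1)).
      set (JJ := Jfun (Kt K2) c2 (s - q + 1 + tau1) - Jfun (Kt K2) c2 (s - q + 1 + tau2)) in *.
      assert (Tri : Rabs (- FD + IE + D + GG + JJ) <= Rabs FD + Rabs IE + Rabs D + Rabs GG + Rabs JJ).
      { eapply Rle_trans. apply Rabs_triang. apply Rplus_le_compat_r.
        eapply Rle_trans. apply Rabs_triang. apply Rplus_le_compat_r.
        eapply Rle_trans. apply Rabs_triang. apply Rplus_le_compat_r.
        eapply Rle_trans. apply Rabs_triang. rewrite Rabs_Ropp. lra. }
      replace (d * (1 + BK + L0)) with (d + d*BK + L0*d) by ring. lra.
    -
      intros sg Hsg. unfold G. rewrite !Jfun_lt by lra.
      assert (R1 := RInt_minus (V:=R_CompleteNormedModule) _ _ sg 1 (Ex3_lem (Kt K1) c1 sg CK1 Cc1 sg 1) (Ex3_lem (Kt K2) c2 sg CK2 Cc2 sg 1)).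
      assert (ExZ : ex_RInt (fun th => Kt K2 sg th * (c1 th - c2 th)) sg 1).
      { apply ex_RInt_cont. intros x. apply cR_mult. apply C2_sec2; auto. apply cR_minus; auto. }
      assert (R2 := RInt_plus (V:=R_CompleteNormedModule) _ _ sg 1 (Ex3_lem E c1 sg CE Cc1 sg 1) ExZ).
      unfold minus, plus, opp in R1, R2; simpl in R1, R2.
      assert (EQ : RInt (fun q => Kt K1 sg q * c1 q) sg 1 - c1 sg - (RInt (fun q => Kt K2 sg q * c2 q) sg 1 - c2 sg)
                   = RInt (fun th => E sg th * c1 th) sg 1 + RInt (fun th => Kt K2 sg th * (c1 th - c2 th)) sg 1 - (c1 sg - c2 sg)).
      { assert (RInt (fun q => Kt K1 sg q * c1 q) sg 1 + - RInt (fun q => Kt K2 sg q * c2 q) sg 1 =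
                RInt (fun th => E sg th * c1 th) sg 1 + RInt (fun th => Kt K2 sg th * (c1 th - c2 th)) sg 1).
        { etransitivity. symmetry. exact R1. etransitivity; [|exact R2]. apply RInt_ext. intros x _. unfold E. simpl. ring. }
        lra. }
      rewrite EQ.
      assert (BZ : Rabs (RInt (fun th => Kt K2 sg th * (c1 th - c2 th)) sg 1) <= BK * d).
      { eapply Rle_trans. apply (RInt_abs_gen _ _ _ (BK * d)). auto.
        intros t Ht. rewrite Rmin_left in Ht by lra. rewrite Rmax_right in Ht by lra.
        rewrite Rabs_mult. apply Rmult_le_compat; try apply Rabs_pos. apply B2K. unfold T1; simpl; lra. apply Hcd; lra.
        rewrite Rabs_right by lra. assert (0 <= BK*d) by nra. nra. }
      assert (BC : Rabs (c1 sg - c2 sg) <= d) by (apply Hcd; lra).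
      unfold Rminus at 1. eapply Rle_trans. apply Rabs_triang. rewrite Rabs_Ropp.
      eapply Rle_trans. apply Rplus_le_compat_r. apply Rabs_triang.
      unfold A. assert (0 <= d * L0) by (apply Rmult_le_pos; lra). replace (d * (1 + BK + L0)) with (d + BK*d + d*L0) by ring. lra. }
  destruct Main as [ME MG].
  assert (HGam : Gam M A = LKc * d) by (unfold A, LKc; rewrite Gam_lin; ring).
  rewrite HGam in ME, MG.
  assert (MG' : forall u, 0 <= u -> Rabs (G u) <= LKc * d).
  { intros u Hu. destruct (Rlt_dec u 1). apply MG; lra. unfold G. rewrite !Jfun_G1 by lra.
    rewrite Rminus_0_r, Rabs_R0. nra. }
  split; [|split].
  - intros s q Hsq. rewrite <- (Kt_T1 K1 s q Hsq), <- (Kt_T1 K2 s q Hsq). apply ME; auto.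
  - intros Heta phi Hphi. unfold Lfun. destruct (Rlt_dec phi 1).
    + rewrite (Jfun_Kt K1) by lra. rewrite (Jfun_Kt K2) by lra.
      replace (Jfun (Kt K1) c1 (phi + eta1) - Jfun (Kt K2) c2 (phi + eta2)) with
        (G (phi + eta1) + (Jfun (Kt K2) c2 (phi + eta1) - Jfun (Kt K2) c2 (phi + eta2))) by (unfold G; ring).
      eapply Rle_trans. apply Rabs_triang.
      assert (X1 := MG' (phi + eta1) ltac:(lra)).
      assert (X2 := Lip2 (phi + eta1) (phi + eta2) ltac:(lra) ltac:(lra)).
      replace (phi + eta1 - (phi + eta2)) with (eta1 - eta2) in X2 by ring.
      assert (L0 * Rabs (eta1 - eta2) <= L0 * d) by (apply Rmult_le_compat_l; lra).
      nra.
    + rewrite Rminus_0_r, Rabs_R0. nra.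
  - intros sg Hsg. rewrite (Jfun_Kt K1) by lra. rewrite (Jfun_Kt K2) by lra. apply MG'. lra.
Qed.
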